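(* Let $\Sigma$ be a finite alphabet and let $C \subseteq \Sigma^n$ be a code with $|C|\ge 2$ and minimum Levenshtein distance $d$. Let $t_\mathsf{I}$ and $t_\mathsf{D}$ be non-negative integers with $t_\mathsf{D} \leq n$ such that $N = n + t_\mathsf{I} - t_\mathsf{D}$ is a positive integer, let $v \in \Sigma^N$ be any word, and let $\ell = |B_\mathsf{L}(v, t_\mathsf{D}, t_\mathsf{I}) \cap C|$. If $$\frac{d}{2} > t_\mathsf{D} + \frac{t_\mathsf{I}(n-t_\mathsf{D})}{N},$$ then $$\ell \leq \frac{N(d/2 - t_\mathsf{D})}{N(d/2-t_\mathsf{D})-t_\mathsf{I}(n-t_\mathsf{D})}.$$
   Context: For words $x,y$ over $\Sigma$ (possibly of different lengths), the Levenshtein distance $d_\mathsf{L}(x,y)$ is the minimum number of single-symbol insertions and deletions needed to transform $x$ into $y$. The minimum Levenshtein distance of a code $C$ is $\min\{d_\mathsf{L}(c_1,c_2): c_1\neq c_2 \in C\}$. For a word $v$ and non-negative integers $a,b$, $B_\mathsf{L}(v,a,b)$ denotes the set of all words obtainable from $v$ by at most $a$ insertions and at most $b$ deletions. *)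

(* Defs.v *)
From HB Require Import structures.
From mathcomp Require Import all_boot all_order all_algebra.
Set Implicit Arguments. Unset Strict Implicit. Unset Printing Implicit Defensive.

Inductive edits (T : Type) (x : seq T) : seq T -> nat -> nat -> Prop :=
| edits_refl : edits x x 0 0
| edits_ins (y u w : seq T) (a : T) (i j : nat) :
    edits x y i j -> y = u ++ w -> edits x (u ++ a :: w) i.+1 j
| edits_del (y u w : seq T) (a : T) (i j : nat) :
    edits x y i j -> y = u ++ a :: w -> edits x (u ++ w) i j.+1.

Definition transformable (T : Type) (x y : seq T) (k : nat) : Prop :=
  exists i j, i + j = k /\ edits x y i j.

Definition lev_dist_is (T : Type) (x y : seq T) (k : nat) : Prop :=
  transformable x y k /\ forall k', transformable x y k' -> k <= k'.

Definition in_lev_ball (T : Type) (v : seq T) (a b : nat) (y : seq T) : Prop :=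
  exists i j, i <= a /\ j <= b /\ edits v y i j.

Definition min_lev_dist (S : finType) (n : nat) (C : {set n.-tuple S}) (d : nat) : Prop :=
  (exists c1 c2, [/\ c1 \in C, c2 \in C, c1 != c2 & lev_dist_is (val c1) (val c2) d]) /\
  (forall c1 c2 k, c1 \in C -> c2 \in C -> c1 != c2 ->
     lev_dist_is (val c1) (val c2) k -> d <= k).

From Stdlib Require Import ClassicalEpsilon.
Definition pbool (P : Prop) : bool :=
  if excluded_middle_informative P then true else false.

(* Main.v *)
Require Import Defs.
From HB Require Import structures.
From mathcomp Require Import all_boot all_order all_algebra.
From mathcomp Require Import zify.
From Stdlib Require Import ClassicalEpsilon.
Import Order.TTheory GRing.Theory Num.Theory.
Set Implicit Arguments. Unset Strict Implicit.

Lemma edits_size (T : Type) (x y : seq T) i j : edits x y i j -> (size y + j = size x + i)%N.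
Proof.
elim=> [|y0 u w a i0 j0 _ IH E | y0 u w a i0 j0 _ IH E]; first by [].
- move: IH; rewrite E !size_cat /=; lia.
- move: IH; rewrite E !size_cat /=; lia.
Qed.

Lemma sub_consE (T : eqType) (b a : T) s w :
  subseq (b :: s) (a :: w) = if b == a then subseq s w else subseq (b :: s) w.
Proof. by rewrite /=; case: ifP. Qed.

Lemma subseq_del (T : eqType) (a : T) (w u s : seq T) :
  subseq s (u ++ a :: w) ->
  exists s', [/\ subseq s' s, subseq s' (u ++ w) & (size s <= (size s').+1)%N].
Proof.
elim: u s => [|c u IH] [|b s].
- by move=> _; exists [::]; rewrite !sub0seq.
- rewrite cat0s sub_consE; case: ifP => [/eqP -> | _] H.
  + by exists s; split => //; exact: subseq_cons.
  + by exists (b :: s); split => //; exact: subseq_refl.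
- by move=> _; exists [::]; rewrite !sub0seq.
- rewrite cat_cons sub_consE; case: ifP => [/eqP -> | _] H.
  + have [s' [H1 H2 H3]] := IH _ H.
    by exists (c :: s'); rewrite cat_cons !sub_consE !eqxx H1 H2.
  + have [s' [H1 H2 H3]] := IH _ H.
    exists s'; split => //.
    by apply: subseq_trans H2 _; rewrite cat_cons; exact: subseq_cons.
Qed.

Lemma edits_common (T : eqType) (x y : seq T) i j : edits x y i j ->
  exists s, [/\ subseq s x, subseq s y & (size x <= size s + j)%N].
Proof.
elim=> [|y0 u w a i0 j0 _ [s [H1 H2 H3]] E | y0 u w a i0 j0 _ [s [H1 H2 H3]] E].
- by exists x; rewrite subseq_refl addn0.
- exists s; split => //; apply: subseq_trans H2 _; rewrite E.
  by apply: cat_subseq; [exact: subseq_refl | exact: subseq_cons].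
- rewrite E in H2; have [s' [K1 K2 K3]] := @subseq_del _ a w u s H2.
  exists s'; split => //; first exact: subseq_trans K1 H1.
  lia.
Qed.

Lemma edits_dels (T : eqType) (x : seq T) i (y : seq T) : forall (p s : seq T) j,
  edits x (p ++ y) i j -> subseq s y -> edits x (p ++ s) i (j + (size y - size s)).
Proof.
elim: y => [|a y IH] p s j E.
- by move/eqP: (sub0seq s); rewrite subseq0 => _ /eqP ->; rewrite subnn addn0.
- have Ed : edits x (p ++ y) i j.+1 by exact: (@edits_del _ x _ p y a i j E erefl).
  case: s => [|b s] /=.
  + move=> _; have := IH p [::] _ Ed (sub0seq y); rewrite /= !subn0.
    by rewrite addSnnS.
  + case: ifP => [/eqP -> | _] H.
    * have := IH (rcons p a) s j; rewrite -!cats1 -!catA /=.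
      by move=> /(_ E H); rewrite subSS.
    * have := IH p (b :: s) _ Ed H; have := size_subseq H => /= Hs.
      by rewrite addSnnS subSn.
Qed.

Lemma edits_inss (T : eqType) (x : seq T) j (t : seq T) : forall (p s : seq T) i,
  edits x (p ++ s) i j -> subseq s t -> edits x (p ++ t) (i + (size t - size s)) j.
Proof.
elim: t => [|a t IH] p s i E.
- by rewrite subseq0 => /eqP Hs; subst s; rewrite subnn addn0.
- case: s E => [|b s] E /=.
  + move=> _; have := IH p [::] _ E (sub0seq t); rewrite /= !subn0 => E2.
    by have := edits_ins a E2 (erefl _); rewrite addnS.
  + case: ifP => [/eqP Eb | _] H.
    * subst b; have := IH (rcons p a) s i; rewrite -!cats1 -!catA /=.
      by move=> /(_ E H); rewrite subSS.
    * have := IH p (b :: s) _ E H; have := size_subseq H => /= Hs E2.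
      by have := edits_ins a E2 (erefl _); rewrite subSn // addnS.
Qed.

Lemma common_trans (T : eqType) (c1 c2 s : seq T) :
  size c1 = size c2 -> subseq s c1 -> subseq s c2 ->
  transformable c1 c2 ((size c1 - size s) + (size c1 - size s)).
Proof.
move=> Hsz H1 H2.
have E0 : edits c1 ([::] ++ c1) 0 0 by exact: edits_refl.
have := @edits_dels _ c1 0 c1 [::] s 0 E0 H1; rewrite /= add0n => E1.
have := @edits_inss _ c1 _ c2 [::] s 0 E1 H2; rewrite /= add0n Hsz => E2.
by exists (size c2 - size s), (size c2 - size s).
Qed.
Lemma mask_le (T : eqType) (m1 m2 : bitseq) (s : seq T) :
  all2 implb m1 m2 -> subseq (mask m1 s) (mask m2 s).
Proof.
elim: m1 m2 s => [|b1 m1 IH] [|b2 m2] [|x s] //; rewrite ?mask0s ?sub0seq //.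
move=> /andP [Hb H]; rewrite !mask_cons.
case: b1 b2 Hb => [] [] // _.
- change (nseq true x) with [:: x]; rewrite !cat1s sub_consE eqxx; exact: IH.
- change (nseq true x) with [:: x]; change (nseq false x) with (@nil T).
  rewrite cat0s cat1s; apply: subseq_trans (IH _ s H) _; exact: subseq_cons.
- change (nseq false x) with (@nil T); rewrite !cat0s; exact: IH.
Qed.

Definition mset N (P : {set 'I_N}) : bitseq := [seq i \in P | i <- enum 'I_N].
Arguments mset {N} P.

Lemma size_mset N (P : {set 'I_N}) : size (mset P) = N.
Proof. by rewrite size_map size_enum_ord. Qed.

Lemma count_mset N (P : {set 'I_N}) : count id (mset P) = #|P|.
Proof.
rewrite count_map cardE /enum_mem -enumT size_filter.
rewrite filter_predT; exact: eq_count.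
Qed.

Lemma mset_I N (P Q : {set 'I_N}) : all2 implb (mset (P :&: Q)) (mset P).
Proof.
rewrite /mset; elim: (enum 'I_N) => //= i r ->; rewrite inE andbT.
by apply/implyP => /andP [].
Qed.

Lemma mset_of N (m : bitseq) : size m = N -> mset [set i : 'I_N | nth false m i] = m.
Proof.
move=> Hm; rewrite -[RHS](mkseq_nth false) Hm /mkseq -val_enum_ord -map_comp.
by apply: eq_map => i; rewrite inE.
Qed.

Lemma positions (S : eqType) N (v c : seq S) i j k :
  size v = N -> edits v c i j -> (k + j <= size v)%N ->
  exists P : {set 'I_N}, #|P| = k /\ subseq (mask (mset P) v) c.
Proof.
move=> Hv E Hk; have [s [H1 H2 H3]] := edits_common E.
have Hks : (k <= size s)%N by lia.
have Hs1 : subseq (take k s) v by apply: subseq_trans H1; exact: take_subseq.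
have Hs2 : subseq (take k s) c by apply: subseq_trans H2; exact: take_subseq.
have [m Hm Em] := subseqP Hs1.
exists [set i0 : 'I_N | nth false m i0]; rewrite mset_of ?Hm // -Em; split => //.
rewrite -(@count_mset N [set i0 : 'I_N | nth false m i0]) mset_of ?Hm //.
by rewrite -(size_mask Hm) -Em size_take; case: ltnP => //; lia.
Qed.

Lemma sum_in_card (I : finType) (A : {set I}) : \sum_i (i \in A : nat) = #|A|.
Proof.
rewrite -sum1_card [RHS]big_mkcond /=; apply: eq_bigr => i _.
by case: (i \in A).
Qed.

Lemma cauchy (I : finType) (f : I -> nat) :
  ((\sum_i f i) ^ 2 <= #|I| * \sum_i (f i) ^ 2)%N.
Proof.
have E1 : ((\sum_i f i) ^ 2 = \sum_i \sum_j f i * f j)%N.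
  rewrite expnS expn1 big_distrl /=; apply: eq_bigr => i _.
  by rewrite big_distrr.
have E2 : (\sum_i \sum_j (f i ^ 2 + f j ^ 2) = 2 * (#|I| * \sum_i (f i) ^ 2))%N.
  rewrite (eq_bigr (fun i => #|I| * f i ^ 2 + \sum_j f j ^ 2)%N); last first.
    by move=> i _; rewrite big_split /= sum_nat_const mulnC.
  rewrite big_split /= sum_nat_const -big_distrr /=; by rewrite mul2n -addnn.
rewrite -(@leq_pmul2l 2) // E1 -E2 big_distrr /=.
apply: leq_sum => i _; rewrite big_distrr /=; apply: leq_sum => j _.
move: (f i) (f j) => a b; rewrite -!mulnn; case: (leqP a b) => h; [have := leq_mul h h | have := leq_mul (ltnW h) (ltnW h)]; nia.
Qed.

Lemma count_pairs (T I : finType) (B : {set T}) (F : T -> {set I}) (w n d : nat) :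
  (forall c, c \in B -> #|F c| = w) ->
  (forall a b, a \in B -> b \in B -> a != b -> 2 * #|F a :&: F b| + d <= 2 * n)%N ->
  (2 * (#|B| * w) ^ 2 + #|I| * (#|B| * (#|B| - 1) * d) <=
     2 * #|I| * (#|B| * w) + 2 * #|I| * (#|B| * (#|B| - 1) * n))%N.
Proof.
move=> Hw Hd.
set L := #|B|.
pose m i := (\sum_(c in B) (i \in F c : nat))%N.
have Hsum : (\sum_i m i = L * w)%N.
  rewrite /m exchange_big /= (eq_bigr (fun _ => w)); last first.
    by move=> c Hc; rewrite sum_in_card Hw.
  by rewrite sum_nat_const mulnC.
have Hsq : (\sum_i m i ^ 2 = \sum_(a in B) \sum_(b in B) #|F a :&: F b|)%N.
  rewrite (eq_bigr (fun i => \sum_(a in B) \sum_(b in B) (i \in F a :&: F b : nat))%N); last first.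
    move=> i _; rewrite /m expnS expn1 big_distrl /=; apply: eq_bigr => a _.
    rewrite big_distrr /=; apply: eq_bigr => b _.
    by rewrite inE mulnb.
  rewrite exchange_big /=; apply: eq_bigr => a _.
  rewrite exchange_big /=; apply: eq_bigr => b _.
  exact: sum_in_card.
have Hrow : forall a, a \in B ->
    (2 * (\sum_(b in B) #|F a :&: F b|) + (L - 1) * d <= 2 * w + (L - 1) * (2 * n))%N.
  move=> a Ha; rewrite (bigD1 a Ha) /= setIid Hw //.
  have HL : #|[pred b in B | b != a]| = (L - 1)%N.
    by rewrite /L (cardD1 a B) Ha /= addKn; apply: eq_card => b; rewrite !inE andbC.
  have : (\sum_(b in B | b != a) (2 * #|F a :&: F b| + d) <= \sum_(b in B | b != a) 2 * n)%N.
    by apply: leq_sum => x /andP [Hb Hab]; apply: Hd => //; rewrite eq_sym.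
  rewrite big_split /= -big_distrr /= !sum_nat_const HL => H; rewrite mulnDr -addnA leq_add2l; exact: H.
have Hall : (2 * (\sum_i m i ^ 2) + L * ((L - 1) * d) <= L * (2 * w + (L - 1) * (2 * n)))%N.
  rewrite Hsq big_distrr /= -sum_nat_const -sum_nat_const -big_split /=.
  by apply: leq_sum => x Hx; exact: Hrow.
have Hc := cauchy m; rewrite Hsum in Hc.
nia.
Qed.

Lemma pboolP (P : Prop) : pbool P -> P.
Proof. by rewrite /pbool; case: excluded_middle_informative. Qed.

Lemma dist_bound (S : eqType) (x y s : seq S) d :
  size x = size y -> subseq s x -> subseq s y ->
  (forall k, lev_dist_is x y k -> d <= k)%N ->
  (2 * size s + d <= 2 * size x)%N.
Proof.
move=> Hsz H1 H2 Hd.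
have Ht := common_trans Hsz H1 H2.
have Hex : exists k, pbool (transformable x y k) by exists ((size x - size s) + (size x - size s))%N; rewrite /pbool; case: excluded_middle_informative.
case: (ex_minnP Hex) => k /pboolP Hk Hmin.
have Hlev : lev_dist_is x y k.
  split => // k' Hk'; apply: Hmin; rewrite /pbool.
  by case: excluded_middle_informative => // /(_ Hk').
have h3 := Hd _ Hlev.
have h2 : (k <= (size x - size s) + (size x - size s))%N.
  by apply: Hmin; rewrite /pbool; case: excluded_middle_informative => // /(_ Ht).
have := size_subseq H1; lia.
Qed.

From mathcomp Require Import ring lra.
Local Open Scope ring_scope.

Lemma final_alg (L w tI tD d : nat) :
 (0 < w + tI)%N ->
 (2*(L*w)^2 + (w+tI)*(L*(L-1)*d) <= 2*(w+tI)*(L*w) + 2*(w+tI)*(L*(L-1)*(w+tD)))%N ->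
 tD%:R + tI%:R * (w%:R + tD%:R - tD%:R) / (w%:R + tI%:R) < d%:R / 2 :> rat ->
 L%:R <= (w%:R + tI%:R) * (d%:R / 2 - tD%:R) /
   ((w%:R + tI%:R) * (d%:R/2 - tD%:R) - tI%:R * (w%:R + tD%:R - tD%:R)) :> rat.
Proof.
move=> HN Hc Hh.
rewrite addrK in Hh *.
have Nq : 0 < (w%:R + tI%:R : rat) by rewrite -natrD ltr0n.
set X := tI%:R * w%:R / (w%:R + tI%:R) : rat in Hh.
have EX : X * (w%:R + tI%:R) = tI%:R * w%:R by rewrite /X divfK // gt_eqF.
have Hpos : 0 < (w%:R + tI%:R) * (d%:R / 2 - tD%:R - X) :> rat.
  by apply: mulr_gt0 => //; lra.
have Hden : 0 < (w%:R + tI%:R) * (d%:R / 2 - tD%:R) - tI%:R * w%:R :> rat.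
  by move: Hpos; rewrite mulrBr [_ * X]mulrC EX.
rewrite ler_pdivlMr //.
case: L Hc => [|K] Hc.
  rewrite mul0r; have : 0 <= tI%:R * w%:R :> rat by rewrite -natrM ler0n.
  lra.
rewrite subSS subn0 in Hc.
move: Hc; rewrite -(ler_nat rat) -addn1 !(natrD, natrM) => Hc.
have Ed : d%:R = 2 * (d%:R / 2) :> rat by rewrite mulrC divfK.
set h := d%:R / 2 in Hc Hden Hpos Hh Ed *.
rewrite Ed in Hc.
rewrite -[K.+1]addn1 natrD in Hc *.
have Hl : 0 < 2 * (K%:R + 1) :> rat by have : 0 <= K%:R :> rat by []; lra.
rewrite leNgt; apply/negP => Hneg.
have := Hneg; rewrite -(ltr_pM2l Hl) => H2.
clear Hpos Hden Hh EX Hneg.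
lra.
Qed.


Theorem mainTheorem1 (S : finType) (n : nat) (C : {set n.-tuple S}) (d tI tD : nat)
  (v : (n + tI - tD).-tuple S) :
  (2 <= #|C|)%N ->
  min_lev_dist C d ->
  (tD <= n)%N ->
  (0 < n + tI - tD)%N ->
  tD%:Q + tI%:Q * (n%:Q - tD%:Q) / (n + tI - tD)%N%:Q < d%:Q / 2 ->
  #|[set c in C | pbool (in_lev_ball (val v) tD tI (val c))]|%:Q <=
    (n + tI - tD)%N%:Q * (d%:Q / 2 - tD%:Q) /
    ((n + tI - tD)%N%:Q * (d%:Q / 2 - tD%:Q) - tI%:Q * (n%:Q - tD%:Q)).
Proof.
move=> _ [_ Hmin] HtD HN Hhyp.
set N := (n + tI - tD)%N in v HN Hhyp *.
set B := [set c in C | _].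
set w := (n - tD)%N.
have HNw : N = (w + tI)%N by rewrite /N /w; lia.
have Hnw : n = (w + tD)%N by rewrite /w; lia.
have Hpos : forall c, c \in B -> exists P : {set 'I_N},
    #|P| = w /\ subseq (mask (mset P) (val v)) (val c).
  move=> c; rewrite inE => /andP [_ /pboolP [i [j [Hi [Hj E]]]]].
  have Hs := edits_size E; rewrite !size_tuple in Hs.
  apply: positions E _ => //; first exact: size_tuple.
  rewrite size_tuple; lia.
pose F (c : n.-tuple S) : {set 'I_N} :=
  odflt set0 [pick P : {set 'I_N} | (#|P| == w) && subseq (mask (mset P) (val v)) (val c)].
have HF : forall c, c \in B -> #|F c| = w /\ subseq (mask (mset (F c)) (val v)) (val c).
  move=> c Hc; rewrite /F; case: pickP => [P /andP [/eqP H1 H2] | H] //=.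
  have [P [H1 H2]] := Hpos c Hc.
  by have := H P; rewrite H1 eqxx H2.
have Hw : forall c, c \in B -> #|F c| = w by move=> c /HF [].
have Hd : forall a b, a \in B -> b \in B -> a != b ->
    (2 * #|F a :&: F b| + d <= 2 * n)%N.
  move=> a b Ha Hb Hab.
  have [_ Ha2] := HF a Ha; have [_ Hb2] := HF b Hb.
  have Hs : size (mask (mset (F a :&: F b)) (val v)) = #|F a :&: F b|.
    by rewrite size_mask ?count_mset // size_mset size_tuple.
  rewrite -Hs -(size_tuple a).
  apply: (@dist_bound _ (val a) (val b)).
  - by rewrite !size_tuple.
  - exact: subseq_trans (mask_le _ (mset_I _ _)) Ha2.
  - by rewrite setIC; exact: subseq_trans (mask_le _ (mset_I _ _)) Hb2.
  - move=> k Hk; apply: Hmin Hk => //.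
    + by move: Ha; rewrite inE => /andP [].
    + by move: Hb; rewrite inE => /andP [].
have Hc := count_pairs Hw Hd.
rewrite card_ord in Hc.
have cq : forall k : nat, k%:Q = k%:R :> rat by [].
rewrite !cq in Hhyp *.
have nR : n%:R = w%:R + tD%:R :> rat by rewrite {1}Hnw natrD.
have NR : N%:R = w%:R + tI%:R :> rat by rewrite HNw natrD.
rewrite nR NR in Hhyp *.
move: (#|B|) Hc => L Hc.
rewrite HNw Hnw in Hc.
apply: final_alg Hc Hhyp; by rewrite -HNw.
Qed.
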